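(* Let $\Gamma_M$ ($M>0$) be a family of nonatomic routing games with a single OD pair with demand $M$, sharing the same graph, path set and edge costs $(c_e)_{e\in\mathcal E}$, where each $c_e$ is a polynomial. Then $\mathrm{PoA}(\Gamma_M)\to 1$ as $M\to 0$.
   Context: A nonatomic routing game with a single OD pair consists of a finite directed multigraph with edge set $\mathcal E$, a nonempty finite set $\mathcal P$ of paths from an origin to a destination, a demand $M>0$, and continuous nondecreasing edge costs $c_e:[0,\infty)\to[0,\infty)$. Feasible flows: $f\in\mathbb R_+^{\mathcal P}$ with $\sum_p f_p=M$; loads $x_e=\sum_{p\ni e}f_p$; path costs $c_p(f)=\sum_{e\in p}c_e(x_e)$. A Wardrop equilibrium is a feasible $f^*$ with $c_p(f^* )\le c_{p'}(f^* )$ whenever $f^*_p>0$. Social cost $L(x)=\sum_e x_ec_e(x_e)$; $\mathrm{Opt}$ is its minimum over feasible loads, $\mathrm{Eq}=L(x^* )$ at an equilibrium load, and $\mathrm{PoA}=\mathrm{Eq}/\mathrm{Opt}$; it is assumed that $\mathrm{Opt}>0$ (otherwise $\mathrm{PoA}:=1$). *)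

(* Defs.v *)
From HB Require Import structures.
From mathcomp Require Import all_boot all_order all_algebra.
From mathcomp Require Import classical_sets reals.

Set Implicit Arguments.
Unset Strict Implicit.
Unset Printing Implicit Defensive.

Import Order.TTheory GRing.Theory Num.Theory.
Local Open Scope ring_scope.
Local Open Scope classical_set_scope.

Section Routing.
Variables (R : realType) (V E : finType) (src tgt : E -> V).

Fixpoint walk_from (v : V) (s : seq E) (d : V) : bool :=
  match s with
  | [::] => v == d
  | e :: s' => (src e == v) && walk_from (tgt e) s' d
  end.

Definition is_od_path (o d : V) (s : seq E) : bool :=
  walk_from o s d && uniq (o :: map tgt s).

Variables (P : finType) (pth : P -> seq E) (c : E -> {poly R}).

Definition feasible (M : R) (f : P -> R) : Prop :=
  (forall p, 0 <= f p) /\ \sum_(p : P) f p = M.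

Definition load (f : P -> R) (e : E) : R := \sum_(p : P | e \in pth p) f p.

Definition path_cost (f : P -> R) (p : P) : R :=
  \sum_(e <- pth p) (c e).[load f e].

Definition social_cost (x : E -> R) : R := \sum_(e : E) x e * (c e).[x e].

Definition wardrop_eq (M : R) (f : P -> R) : Prop :=
  feasible M f /\
  forall p p', 0 < f p -> path_cost f p <= path_cost f p'.

Definition Opt (M : R) : R :=
  inf [set social_cost (load f) | f in [set f | feasible M f]].

Definition PoA (M : R) (f : P -> R) : R :=
  if 0 < Opt M then social_cost (load f) / Opt M else 1.

End Routing.

(* Main.v *)
Require Import Defs.
From HB Require Import structures.
From mathcomp Require Import all_boot all_order all_algebra.
From mathcomp Require Import classical_sets reals.
From mathcomp Require Import ring lra.
Import Order.TTheory GRing.Theory Num.Theory.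
Local Open Scope ring_scope.

Lemma poly_expand (R : realType) (c : {poly R}) :
  (forall x, 0 <= x -> 0 <= c.[x]) ->
  exists d : nat, exists a : R, exists B : R,
    [/\ 0 <= a, 0 <= B, (a = 0 -> c = 0) &
     forall x, 0 <= x -> x <= 1 -> `|c.[x] - a * x ^+ d| <= B * x ^+ d.+1].
Proof.
move=> cge0.
case: (eqVneq c 0) => [->|cn0].
  exists 0%N, 0, 0; split => // x _ _.
  by rewrite horner0 mul0r subr0 normr0 mul0r.
have ex : exists i, c`_i != 0.
  by exists (size c).-1; rewrite -lead_coefE lead_coef_eq0.
case: (ex_minnP ex) => d cd dmin.
have dlt : (d < size c)%N.
  rewrite ltnNge; apply/negP => H; move: cd; by rewrite nth_default // eqxx.
pose B : R := \sum_(i < size c) `|c`_i|.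
have B0 : 0 <= B by apply: sumr_ge0 => i _.
have bnd : forall x : R, 0 <= x -> x <= 1 ->
    `|c.[x] - c`_d * x ^+ d| <= B * x ^+ d.+1.
  move=> x x0 x1.
  rewrite (horner_coef_wide x (leqnn _)) (bigD1 (Ordinal dlt)) //= addrC addrK.
  apply: le_trans (ler_norm_sum _ _ _) _.
  rewrite /B mulr_suml.
  apply: le_trans (_ : \sum_(i < size c | i != Ordinal dlt) `|c`_i| * x ^+ d.+1 <= _).
    apply: ler_sum => i hi; rewrite normrM (ger0_norm (exprn_ge0 _ x0)).
    case: (eqVneq c`_i 0) => [->|ci0]; first by rewrite normr0 !mul0r.
    apply: ler_wpM2l => //; apply: ler_wiXn2l => //.
    have := dmin _ ci0; rewrite leq_eqVlt => /orP [/eqP e|//].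
    by move: hi; rewrite -val_eqE /= e eqxx.
  rewrite [X in _ <= X](bigD1 (Ordinal dlt)) //= lerDr.
  by apply: mulr_ge0 => //; apply: exprn_ge0.
have apos : 0 < c`_d.
  rewrite lt_neqAle eq_sym cd /=; rewrite leNgt; apply/negP => an.
  pose x : R := Order.min 1 (- c`_d / (B + 1)).
  have B1 : 0 < B + 1 by rewrite ltr_wpDl.
  have q0 : 0 < - c`_d / (B + 1) by rewrite divr_gt0 // oppr_gt0.
  have x0 : 0 < x by rewrite lt_min ltr01 q0.
  have x1 : x <= 1 by rewrite ge_min lexx.
  have xq : x <= - c`_d / (B + 1) by rewrite ge_min lexx orbT.
  have H := le_trans (ler_norm _) (bnd x (ltW x0) x1).
  have H2 := cge0 x (ltW x0).
  have H3 : B * x <= B * (- c`_d / (B + 1)) by apply: ler_wpM2l.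
  have H5 : c`_d + B * (- c`_d / (B + 1)) = c`_d / (B + 1).
    field; exact: lt0r_neq0.
  have H6 : c`_d + B * x < 0.
    apply: le_lt_trans (lerD (lexx _) H3) _.
    by rewrite H5 pmulr_llt0 ?invr_gt0.
  have : c.[x] <= x ^+ d * (c`_d + B * x).
    have -> : x ^+ d * (c`_d + B * x) = B * x ^+ d.+1 + c`_d * x ^+ d.
      by rewrite exprS; ring.
    by rewrite -lerBlDr.
  move=> H7.
  have : x ^+ d * (c`_d + B * x) < 0 by rewrite pmulr_rlt0 // exprn_gt0.
  by move=> /(le_lt_trans H7); rewrite ltNge H2.
exists d, c`_d, B; split => //; first exact: ltW.
by move=> e; move: cd; rewrite e eqxx.
Qed.
Lemma lerX2 {R : realType} (x y : R) m : 0 <= x -> x <= y -> x ^+ m <= y ^+ m.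
Proof.
move=> x0 xy; have := @lerXn2r R m x y; rewrite !nnegrE; apply => //.
exact: le_trans xy.
Qed.

Lemma sgn_pow (R : realType) (x y : R) m : 0 <= x -> 0 <= y ->
  0 <= (y - x) * (y ^+ m - x ^+ m).
Proof.
move=> x0 y0; case: (lerP x y) => h.
  apply: mulr_ge0; rewrite subr_ge0 //.
  exact: lerX2.
apply: mulr_le0; rewrite subr_le0; first exact: ltW.
by apply: lerX2 => //; apply: ltW.
Qed.

Lemma young (R : realType) (x y : R) k : 0 <= x -> 0 <= y ->
  k.+1%:R * (x ^+ k * y) <= k%:R * x ^+ k.+1 + y ^+ k.+1.
Proof.
move=> x0 y0.
have E : y ^+ k.+1 - x ^+ k.+1 - k.+1%:R * x ^+ k * (y - x) =
  \sum_(i < k.+1) (y - x) * (y ^+ (k - i) - x ^+ (k - i)) * x ^+ i.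
  have S2 : k.+1%:R * x ^+ k * (y - x) =
      \sum_(i < k.+1) (y - x) * (x ^+ (k - i) * x ^+ i).
    rewrite (eq_bigr (fun _ => (y - x) * x ^+ k)); last first.
      by move=> i _; rewrite -exprD subnK // -ltnS.
    by rewrite sumr_const card_ord -mulr_natl; ring.
  rewrite subrXX /= mulr_sumr S2 -sumrB; apply: eq_bigr => i _; ring.
have : 0 <= y ^+ k.+1 - x ^+ k.+1 - k.+1%:R * x ^+ k * (y - x).
  rewrite E; apply: sumr_ge0 => i _; apply: mulr_ge0; last exact: exprn_ge0.
  exact: sgn_pow.
move=> H; rewrite -subr_ge0.
have -> : k%:R * x ^+ k.+1 + y ^+ k.+1 - k.+1%:R * (x ^+ k * y) =
    y ^+ k.+1 - x ^+ k.+1 - k.+1%:R * x ^+ k * (y - x).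
  rewrite !exprS -[k.+1]addn1 natrD; ring.
exact: H.
Qed.

Lemma load_ge0 (R : realType) (E P : finType) (pth : P -> seq E) (f : P -> R) e :
  (forall p, 0 <= f p) -> 0 <= load pth f e.
Proof. by move=> h; apply: sumr_ge0 => p _. Qed.

Lemma load_le (R : realType) (E P : finType) (pth : P -> seq E) (f : P -> R) M e :
  feasible M f -> load pth f e <= M.
Proof.
move=> [h <-]; rewrite /load [X in _ <= X](bigID (fun p => e \in pth p)) /= lerDl.
by apply: sumr_ge0 => p _.
Qed.

Lemma social_ge0 (R : realType) (E P : finType) (pth : P -> seq E) (c : E -> {poly R}) (f : P -> R) :
  (forall e x, 0 <= x -> 0 <= (c e).[x]) -> (forall p, 0 <= f p) ->
  0 <= social_cost c (load pth f).
Proof.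
move=> cge0 h; apply: sumr_ge0 => e _; apply: mulr_ge0; first exact: load_ge0.
by apply: cge0; apply: load_ge0.
Qed.

Section FinishSec.
Local Open Scope classical_set_scope.
Lemma finish (R : realType) (E P : finType) (pth : P -> seq E) (c : E -> {poly R})
  (M : R) (f : P -> R) (eps : R) :
  (forall e x, 0 <= x -> 0 <= (c e).[x]) -> 0 < eps -> feasible M f ->
  (forall g, feasible M g -> social_cost c (load pth f) <=
       (1 + eps / 2) * social_cost c (load pth g)) ->
  `|PoA pth c M f - 1| < eps.
Proof.
move=> cge0 eps0 ff H.
rewrite /PoA.
set L := social_cost c (load pth f).
set S := [set social_cost c (load pth g) | g in [set g | feasible M g]].
have lb : has_lbound S.
  exists 0 => z [g hg <-]; apply: social_ge0 => //; by case: hg.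
have Sf : S L by exists f.
have Ole : Opt pth c M <= L := ge_inf lb Sf.
have e2 : 0 < 1 + eps / 2 by rewrite ltr_wpDr ?divr_ge0 ?ltW.
have geO : L / (1 + eps / 2) <= Opt pth c M.
  apply: lb_le_inf; first by exists L.
  move=> z [g hg <-]; rewrite ler_pdivrMr // mulrC; exact: H.
case: ifP => hO; last by rewrite subrr normr0.
have h1 : 1 <= L / Opt pth c M by rewrite ler_pdivlMr // mul1r.
rewrite ger0_norm ?subr_ge0 //.
rewrite ltrBlDl; apply: (le_lt_trans (y := 1 + eps / 2)).
  by rewrite ler_pdivrMr // mulrC -ler_pdivrMr.
by rewrite ltrD2l ltr_pdivrMr // ltr_pMr // ltr1n.
Qed.
End FinishSec.

Lemma flow_id (R : realType) (E P : finType) (pth : P -> seq E) (f : P -> R) (h : E -> R) :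
  (forall p, uniq (pth p)) ->
  \sum_e load pth f e * h e = \sum_p f p * \sum_(e <- pth p) h e.
Proof.
move=> u.
rewrite /load.
under eq_bigr do rewrite mulr_suml big_mkcond /=.
rewrite exchange_big /=; apply: eq_bigr => p _.
rewrite [in RHS]big_uniq // mulr_sumr [in RHS]big_mkcond /=; apply: eq_bigr => e _.
by case: ifP.
Qed.

Lemma term_le_seq (R : realType) (T : eqType) (s : seq T) (F : T -> R) e :
  e \in s -> (forall i, 0 <= F i) -> F e <= \sum_(i <- s) F i.
Proof.
elim: s => [//|x s IH]; rewrite in_cons big_cons => /orP [/eqP <-|hs] h.
  by rewrite lerDl sumr_ge0.
by apply: le_trans (IH hs h) _; rewrite lerDr.
Qed.

Lemma fin_pos_lb (R : realType) (T : finType) (F : T -> R) (Pr : pred T) :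
  (forall t, Pr t -> 0 < F t) -> exists2 al : R, 0 < al & forall t, Pr t -> al <= F t.
Proof.
move=> h; exists (\big[Order.min/1]_(t | Pr t) F t).
  apply: (big_ind (fun x => 0 < x)) => //.
  by move=> x y hx hy; rewrite lt_min hx hy.
by move=> t ht; rewrite (bigD1 t) //= ge_min lexx.
Qed.

Lemma exists_small (R : realType) (K c : R) : 0 <= K -> 0 < c ->
  exists t, [/\ 0 < t, t < 1 & t * K <= c].
Proof.
move=> K0 c0; have d0 : 0 < K + c + 1 by rewrite ltr_wpDl // addr_ge0 // ltW.
exists (c / (K + c + 1)); split.
- by rewrite divr_gt0.
- by rewrite ltr_pdivrMr // mul1r; lra.
- rewrite mulrAC ler_pdivrMr // ler_wpM2l ?ltW //; lra.
Qed.

Lemma social_flow (R : realType) (E P : finType) (pth : P -> seq E) (c : E -> {poly R})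
  (f g : P -> R) : (forall p, uniq (pth p)) ->
  \sum_e load pth g e * (c e).[load pth f e] = \sum_p g p * path_cost pth c f p.
Proof. by move=> u; rewrite flow_id. Qed.

Lemma eq_term (R : realType) (E P : finType) (pth : P -> seq E) (c : E -> {poly R})
  (M : R) (f : P -> R) : wardrop_eq pth c M f ->
  forall p p', f p * path_cost pth c f p <= f p * path_cost pth c f p'.
Proof.
move=> [[f0 _] hw] p p'; case: (eqVneq (f p) 0) => [->|fn0]; first by rewrite !mul0r.
have fp : 0 < f p by rewrite lt_neqAle eq_sym fn0 f0.
apply: ler_wpM2l; first exact: ltW.
exact: hw.
Qed.

Lemma pow_mono {R : realType} {M : R} {i j : nat} : 0 <= M -> M <= 1 -> (i <= j)%N -> M ^+ j <= M ^+ i.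
Proof. by move=> M0 M1 ij; apply: ler_wiXn2l. Qed.

Lemma final_alg (R : realType) (K X Y Z Lx Ly e1 w1 w2 : R) : 0 <= K ->
  (K + 1) * Z <= K * X + Y -> X - e1 <= Z + w1 -> Y - e1 <= Ly -> Lx <= X + w2 ->
  Lx <= Ly + (K + 1) * (w1 + e1) + e1 + w2.
Proof. move=> K0 h1 h2 h3 h4; nra. Qed.

Theorem corollary4p5 (R : realType) (V E : finType) (src tgt : E -> V)
  (o d : V) (P : finType) (pth : P -> seq E) (c : E -> {poly R}) :
  (0 < #|P|)%N ->
  injective pth ->
  (forall p, is_od_path src tgt o d (pth p)) ->
  (forall e x, 0 <= x -> 0 <= (c e).[x]) ->
  (forall e x y, 0 <= x -> x <= y -> (c e).[x] <= (c e).[y]) ->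
  forall eps : R, 0 < eps -> exists2 delta : R, 0 < delta &
    forall M : R, 0 < M -> M < delta ->
    forall f : P -> R, wardrop_eq pth c M f ->
      `|PoA pth c M f - 1| < eps.
Proof.
move=> Pn0 _ hpath cge0 _ eps eps0.
have upth : forall p, uniq (pth p).
  move=> p; have := hpath p; rewrite /is_od_path => /andP [_ /= /andP [_ u]].
  exact: map_uniq u.
suff [delta d0 Hd] : exists2 delta : R, 0 < delta &
    forall M : R, 0 < M -> M < delta -> forall f, wardrop_eq pth c M f ->
    forall g, feasible M g ->
    social_cost c (load pth f) <= (1 + eps / 2) * social_cost c (load pth g).
  exists delta => // M M0 Md f hf; apply: finish => //; first by case: hf.
  by move=> g hg; exact: (Hd M M0 Md f hf g hg).
have [dg hd] := fin_all_exists (fun e => @poly_expand R (c e) (cge0 e)).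
have [a ha] := fin_all_exists hd.
have [B hB] := fin_all_exists ha.
clear hd ha.
have ha0 : forall e, 0 <= a e by move=> e; case: (hB e).
have hB0 : forall e, 0 <= B e by move=> e; case: (hB e).
have hc0 : forall e, a e = 0 -> c e = 0 by move=> e; case: (hB e).
have hbd : forall e z, 0 <= z -> z <= 1 ->
    `|(c e).[z] - a e * z ^+ dg e| <= B e * z ^+ (dg e).+1.
  by move=> e; case: (hB e).
clear hB.
have Lnn : forall M (h : P -> R), feasible M h -> 0 <= social_cost c (load pth h).
  by move=> M h [h0 _]; apply: social_ge0.
case: (boolP [exists p, all (fun e => a e == 0) (pth p)]) => [/existsP [p0 hp0] | hnt].
  exists 1 => // M M0 _ f hf g hg.
  have pc0 : path_cost pth c f p0 = 0.
    rewrite /path_cost big_seq big1 // => e he.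
    by rewrite (hc0 e) ?horner0 //; apply/eqP; exact: (allP hp0 e he).
  apply: (le_trans (y := 0)); last first.
    apply: mulr_ge0; last exact: Lnn hg.
    by rewrite addr_ge0 // divr_ge0 // ltW.
  rewrite /social_cost social_flow //.
  apply: (le_trans (y := \sum_p f p * path_cost pth c f p0)).
    by apply: ler_sum => p _; apply: eq_term hf p p0.
  by rewrite pc0; under eq_bigr do rewrite mulr0; rewrite big1.
have hnt' : forall p, has (fun e => a e != 0) (pth p).
  move=> p; have := existsPn hnt p; rewrite -has_predC.
  by apply: sub_has => e.
pose D := (\max_e dg e)%N.
pose Q := fun k => [exists p, all (fun e => (a e == 0) || (k <= dg e)%N) (pth p)].
have exQ : exists k, Q k.
  case/card_gt0P: Pn0 => p0 _; exists 0%N; apply/existsP; exists p0.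
  by apply/allP => e _; rewrite orbT.
have ubQ : forall k, Q k -> (k <= D)%N.
  move=> k /existsP [p hp]; have /hasP [e he ae] := hnt' p.
  have := allP hp e he; rewrite (negbTE ae) /= => hk.
  by apply: leq_trans hk _; apply: leq_bigmax.
case: (ex_maxnP exQ ubQ) => k /existsP [ps hps] kmax.
have hk1 : forall p, exists2 e, e \in pth p & (a e != 0) && (dg e <= k)%N.
  move=> p; case: (boolP (has (fun e => (a e != 0) && (dg e <= k)%N) (pth p))).
    by move=> /hasP.
  move=> hn; exfalso.
  have : Q k.+1.
    apply/existsP; exists p; apply/allP => e he.
    have := hasPn hn e he; rewrite negb_and negbK -ltnNge.
    by case/orP => ->; rewrite ?orbT.
  by move/kmax; rewrite ltnn.
have hps' : forall e, e \in pth ps -> a e = 0 \/ (k <= dg e)%N.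
  by move=> e he; have := allP hps e he; case/orP => [/eqP|]; [left|right].
pose n : R := #|E|%:R.
pose m : R := #|P|%:R.
have n0 : 0 <= n by apply: ler0n.
have m0 : 0 < m by rewrite ltr0n.
pose S : R := \sum_e (a e + B e).
have hS : forall e, a e + B e <= S.
  move=> e; rewrite /S (bigD1 e) //= lerDl; apply: sumr_ge0 => i _.
  by apply: addr_ge0.
have S0 : 0 <= S by apply: sumr_ge0 => i _; apply: addr_ge0.
have aS : forall e, a e <= S by move=> e; apply: le_trans (hS e); rewrite lerDl.
have BS : forall e, B e <= S by move=> e; apply: le_trans (hS e); rewrite lerDr.
pose Lam : R := \sum_(e <- pth ps) S.
have Lam0 : 0 <= Lam by apply: sumr_ge0.
have [al al0 hal] : exists2 al : R, 0 < al & forall e, a e != 0 -> al <= a e.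
  apply: (@fin_pos_lb R E a (fun e => a e != 0)) => e ae.
  by rewrite lt_neqAle eq_sym ae ha0.
pose beta : R := al / 2 / m ^+ k.+1.
have beta0 : 0 < beta by rewrite divr_gt0 ?exprn_gt0 // divr_gt0.
have e6 : 0 < eps / 6 by rewrite divr_gt0.
have [th [th0 th1 thK]] := @exists_small R (n * (k.+2)%:R * Lam) (eps / 6 * beta)
  (mulr_ge0 (mulr_ge0 n0 (ler0n _ _)) Lam0) (mulr_gt0 e6 beta0).
have [t1 [t10 t11 t1K]] := @exists_small R (2 * S) (al)
  (mulr_ge0 (ler0n _ _) S0) al0.
have [t2 [t20 t21 t2K]] := @exists_small R (2 * Lam) (al * th ^+ k)
  (mulr_ge0 (ler0n _ _) Lam0) (mulr_gt0 al0 (exprn_gt0 _ th0)).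
have [t3 [t30 t31 t3K]] := @exists_small R (n * (2 * (k.+2)%:R) * S) (eps / 6 * beta)
  (mulr_ge0 (mulr_ge0 n0 (mulr_ge0 (ler0n _ _) (ler0n _ _))) S0) (mulr_gt0 e6 beta0).
have [t4 [t40 t41 t4K]] := @exists_small R (n * (k.+1)%:R * S * 2) (eps / 6 * al)
  (mulr_ge0 (mulr_ge0 (mulr_ge0 n0 (ler0n _ _)) S0) (ler0n _ _)) (mulr_gt0 e6 al0).
exists (Order.min t1 (Order.min t2 (Order.min t3 t4))).
  by rewrite !lt_min t10 t20 t30 t40.
move=> M M0 Mlt f hf g hg.
have Mt : [/\ M <= t1, M <= t2, M <= t3 & M <= t4].
  by move: Mlt; rewrite !lt_min => /and4P [h1 h2 h3 h4]; split; apply: ltW.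
case: Mt => Mt1 Mt2 Mt3 Mt4.
have M1 : M <= 1 by apply: le_trans Mt1 (ltW t11).
have MK : forall t K C : R, 0 <= K -> M <= t -> t * K <= C -> M * K <= C.
  by move=> t K C K0 Mt tK; apply: le_trans tK; apply: ler_wpM2r.
have E2 : M * (2 * S) <= al by apply: MK Mt1 t1K; apply: mulr_ge0.
have E3 : M * (2 * Lam) <= al * th ^+ k by apply: MK Mt2 t2K; apply: mulr_ge0.
have E4 : M * (n * (2 * (k.+2)%:R) * S) <= eps / 6 * beta.
  by apply: MK Mt3 t3K; apply: mulr_ge0 => //; apply: mulr_ge0 => //; apply: mulr_ge0.
have E5 : M * (n * (k.+1)%:R * S * 2) <= eps / 6 * al.
  by apply: MK Mt4 t4K; apply: mulr_ge0 => //; apply: mulr_ge0 => //; apply: mulr_ge0.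
clear Mt1 Mt2 Mt3 Mt4 t1K t2K t3K t4K Mlt MK.
have M0' := ltW M0.
have [[f0 fsum] hw] := hf.
have [g0 gsum] := hg.
pose x := load pth f.
pose y := load pth g.
have x0 : forall e, 0 <= x e by move=> e; apply: load_ge0.
have y0 : forall e, 0 <= y e by move=> e; apply: load_ge0.
have xM : forall e, x e <= M by move=> e; apply: load_le; split.
have yM : forall e, y e <= M by move=> e; apply: load_le.
have c0 : forall e z, 0 <= z -> 0 <= (c e).[z] by [].
have cup : forall e z, 0 <= z -> z <= 1 -> (c e).[z] <= S * z ^+ dg e.
  move=> e z z0 z1; have := le_trans (ler_norm _) (hbd e z z0 z1).
  rewrite lerBlDr => h; apply: le_trans h _.
  have : z ^+ (dg e).+1 <= z ^+ dg e by apply: pow_mono.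
  move=> hz; apply: le_trans (_ : (B e + a e) * z ^+ dg e <= _); last first.
    by apply: ler_wpM2r; [apply: exprn_ge0 | rewrite addrC].
  rewrite mulrDl lerD2r; apply: ler_wpM2l => //.
have cmain : forall e z, 0 <= z -> z <= 1 ->
    `|(c e).[z] - a e * z ^+ dg e| <= S * z ^+ (dg e).+1.
  move=> e z z0 z1; apply: le_trans (hbd e z z0 z1) _.
  by apply: ler_wpM2r; [apply: exprn_ge0 | apply: BS].
have chigh : forall e z, 0 <= z -> z <= 1 -> (a e == 0) || (k < dg e)%N ->
    (c e).[z] <= S * z ^+ k.+1.
  move=> e z z0 z1 /orP [/eqP ae|kd].
    by rewrite hc0 // horner0; apply: mulr_ge0 => //; apply: exprn_ge0.
  apply: le_trans (cup e z z0 z1) _; apply: ler_wpM2l => //; exact: pow_mono.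
have clow : forall e z, a e != 0 -> 0 <= z -> z <= M ->
    a e / 2 * z ^+ dg e <= (c e).[z].
  move=> e z ae z0 zM; have z1 := le_trans zM M1.
  have h := hbd e z z0 z1; rewrite distrC in h.
  have {}h := le_trans (ler_norm _) h.
  have hBz : B e * z <= a e / 2.
    have h2 : B e * z <= S * M by apply: ler_pM.
    have h3 := hal e ae; clear -h2 h3 E2; lra.
  have hd : 0 <= a e / 2 - B e * z by rewrite subr_ge0.
  have h5 := mulr_ge0 (exprn_ge0 (dg e) z0) hd.
  move: h; rewrite exprS => h; clear -h h5; lra.
have [p1 fp1] : exists p, 0 < f p.
  have : \sum_p f p <> 0 by rewrite fsum; apply/eqP; rewrite gt_eqF.
  by case/psumr_neq0P => // p /andP [_ h]; exists p.
pose lam := path_cost pth c f p1.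
have lam_le : forall p, lam <= path_cost pth c f p by move=> p; apply: hw.
have fcost : forall p, f p * path_cost pth c f p = f p * lam.
  move=> p; apply/eqP; rewrite eq_le; apply/andP; split.
    exact: eq_term hf p p1.
  by apply: ler_wpM2l => //; apply: lam_le.
have Lx : social_cost c x = M * lam.
  rewrite /social_cost /x social_flow //.
  under eq_bigr do rewrite fcost.
  by rewrite -mulr_suml fsum.
have pcf : forall p, 0 <= path_cost pth c f p.
  by move=> p; apply: sumr_ge0 => e _; apply: cge0; apply: x0.
have pcg : forall p, 0 <= path_cost pth c g p.
  by move=> p; apply: sumr_ge0 => e _; apply: cge0; apply: y0.
have lam0 : 0 <= lam by apply: pcf.
have lam_bd : lam <= Lam * M ^+ k.
  apply: le_trans (lam_le ps) _.
  rewrite /Lam mulr_suml /path_cost big_seq [X in _ <= X]big_seq.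
  apply: ler_sum => e he; case: (hps' e he) => [ae|kd].
    by rewrite hc0 // horner0; apply: mulr_ge0 => //; apply: exprn_ge0.
  apply: le_trans (cup e _ (x0 e) (le_trans (xM e) M1)) _.
  apply: ler_wpM2l => //; apply: (le_trans _ (pow_mono M0' M1 kd)).
  exact: lerX2.
have xc_le : forall e, x e * (c e).[x e] <= x e * lam.
  move=> e; rewrite /x /load !mulr_suml; apply: ler_sum => p hp.
  rewrite -fcost; apply: ler_wpM2l => //.
  apply: (@term_le_seq R _ _ (fun i => (c i).[load pth f i]) e hp) => i.
  by apply: cge0; apply: x0.
have c_le_lam : forall e, 0 < x e -> (c e).[x e] <= lam.
  by move=> e xp; have := xc_le e; rewrite ler_pM2l.
have Ly0 : 0 <= social_cost c y by exact: Lnn hg.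
have e20 : 0 <= eps / 2 by rewrite divr_ge0 // ltW.
case: (lerP (social_cost c x) (social_cost c y)) => [hle|hlt].
  apply: le_trans hle _; rewrite -[X in X <= _]mul1r.
  by apply: ler_wpM2r => //; rewrite lerDl.
have Ly_lb : beta * M ^+ k.+1 <= social_cost c y.
  have [p hp] : exists p, M / m <= g p.
    case: (boolP [exists p, M / m <= g p]) => [/existsP //|/existsPn hn].
    exfalso; case/card_gt0P: Pn0 => p0 _.
    have : \sum_p g p < \sum_(p : P) M / m.
      rewrite (bigD1 p0) //= [X in _ < X](bigD1 p0) //=.
      apply: ltr_leD; first by rewrite ltNge hn.
      by apply: ler_sum => q _; rewrite ltW // ltNge hn.
    rewrite sumr_const gsum -mulr_natr divfK ?ltxx //.
    by rewrite gt_eqF.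
  have [e he /andP [ae dk]] := hk1 p.
  have gpy : g p <= y e.
    rewrite /y /load (bigD1 p) //= lerDl; exact: sumr_ge0.
  have ye1 : y e <= 1 := le_trans (yM e) M1.
  have mp : 0 <= M / m by rewrite divr_ge0 // ltW.
  apply: (le_trans (y := y e * (c e).[y e])); last first.
    rewrite /social_cost (bigD1 e) //= lerDl; apply: sumr_ge0 => i _.
    by apply: mulr_ge0 => //; apply: cge0.
  apply: (le_trans (y := y e * (a e / 2 * y e ^+ dg e))); last first.
    by apply: ler_wpM2l => //; apply: clow.
  apply: (le_trans (y := al / 2 * y e ^+ k.+1)); last first.
    rewrite mulrCA -exprS; apply: ler_pM => //.
    - by rewrite divr_ge0 // ltW.
    - exact: exprn_ge0.
    - by rewrite ler_pM2r ?invr_gt0 //; apply: hal.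
    - exact: pow_mono.
  rewrite /beta -mulrA; apply: ler_wpM2l; first by rewrite divr_ge0 // ltW.
  rewrite mulrC -expr_div_n; apply: lerX2 => //.
  exact: le_trans hp gpy.
pose costly := fun p => (0 < k)%N && has (fun e => (a e != 0) && (dg e == 0)%N) (pth p).
pose sig := \sum_(p | costly p) g p.
have sig0 : 0 <= sig by apply: sumr_ge0.
have ps_nc : ~~ costly ps.
  apply/negP => /andP [kp /hasP [e he /andP [ae /eqP de]]].
  case: (hps' e he) => [ae'|kd]; first by rewrite ae' eqxx in ae.
  by move: kd; rewrite de leqn0 => /eqP k0; rewrite k0 in kp.
pose g2 := fun p => (if costly p then 0 else g p) + (if p == ps then sig else 0).
have g20 : forall p, 0 <= g2 p.
  by move=> p; apply: addr_ge0; case: ifP.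
have g2sum : \sum_p g2 p = M.
  rewrite big_split /= -big_mkcond big_pred1_eq.
  rewrite -gsum [in RHS](bigID costly) /= addrC; congr (_ + _).
  rewrite (bigID costly) /= big1 ?add0r; last by move=> p ->.
  by apply: eq_bigr => p /negbTE ->.
have g2f : feasible M g2 by split.
pose y2 := load pth g2.
have y2_le : forall e, y2 e <= \sum_(p | e \in pth p) (if costly p then 0 else g p)
    + (if e \in pth ps then sig else 0).
  move=> e; rewrite /y2 /load big_split /= lerD2l le_eqVlt; apply/orP; left; apply/eqP.
  case he: (e \in pth ps).
    rewrite (bigD1 ps) //= eqxx big1 ?addr0 // => q /andP [_ /negbTE ->] //.
  apply: big1 => q hq; case: eqP => // qps; by rewrite -qps hq in he.
have y20 : forall e, 0 <= y2 e by move=> e; apply: load_ge0.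
have y2M : forall e, y2 e <= M by move=> e; apply: load_le.
have y2_s : forall e, y2 e <= y e + sig.
  move=> e; apply: le_trans (y2_le e) _; apply: lerD; last by case: ifP.
  by apply: ler_sum => p _; case: ifP.
have y2_n : forall e, e \notin pth ps -> y2 e <= y e.
  move=> e he; apply: le_trans (y2_le e) _; rewrite (negbTE he) addr0.
  by apply: ler_sum => p _; case: ifP.
have y2_d0 : forall e, (0 < k)%N -> a e != 0 -> dg e = 0%N -> y2 e <= 0.
  move=> e kp ae de; apply: le_trans (y2_le e) _.
  have -> : (e \in pth ps) = false.
    apply/negP => he; case: (hps' e he) => [ae'|kd]; first by rewrite ae' eqxx in ae.
    by move: kd; rewrite de leqn0 => /eqP k0; rewrite k0 in kp.
  rewrite addr0 big1 // => p hp.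
  have -> : costly p = true.
    by rewrite /costly kp /=; apply/hasP; exists e => //; rewrite ae de.
  by [].
have sig_bd : sig * (al / 2) <= social_cost c y.
  rewrite /y /social_cost social_flow // /sig mulr_suml.
  rewrite [X in _ <= X](bigID costly) /= -[X in X <= _]addr0; apply: lerD; last first.
    by apply: sumr_ge0 => p _; apply: mulr_ge0.
  apply: ler_sum => p /andP [_ /hasP [e he /andP [ae /eqP de]]].
  apply: ler_wpM2l => //.
  apply: (le_trans (y := (c e).[y e])); last first.
    apply: (@term_le_seq R _ _ (fun i => (c i).[load pth g i]) e he) => i.
    by apply: cge0; apply: y0.
  apply: le_trans (clow e (y e) ae (y0 e) (yM e)).
  by rewrite de expr0 mulr1 ler_pM2r ?invr_gt0 //; apply: hal.
have Msig : M ^+ k * sig <= M * sig.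
  case: (posnP k) => [k0|kp].
    have -> : sig = 0 by rewrite /sig big1 // => p; rewrite /costly k0.
    by rewrite !mulr0.
  by apply: ler_wpM2r => //; rewrite -{2}(expr1 M); apply: pow_mono.
have VI : social_cost c x <= \sum_e y2 e * (c e).[x e].
  rewrite Lx /y2 /x social_flow //.
  have -> : M * lam = \sum_p g2 p * lam by rewrite -mulr_suml g2sum.
  by apply: ler_sum => p _; apply: ler_wpM2l.
pose K : R := k%:R.
have K0 : 0 <= K by apply: ler0n.
have hK1 : k.+1%:R = K + 1 by rewrite -natr1.
have hK2 : k.+2%:R = K + 2.
  rewrite -natr1 hK1; clear; lra.
pose SM2 := S * M ^+ k.+2.
have SM20 : 0 <= SM2 by apply: mulr_ge0 => //; apply: exprn_ge0.
have thml0 : 0 <= th * M * lam by apply: mulr_ge0 => //; apply: mulr_ge0 => //; apply: ltW.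
pose W := SM2 + S * M ^+ k * sig + lam * th * M.
have W0 : 0 <= W.
  have h1 : 0 <= S * M ^+ k * sig.
    by apply: mulr_ge0 => //; apply: mulr_ge0 => //; apply: exprn_ge0.
  rewrite /W; clear -h1 SM20 thml0; lra.
pose main := fun e => (a e != 0) && (dg e == k).
have termw : forall e, [/\
  (if main e then a e * x e ^+ k.+1 else 0) - SM2 <= x e * (c e).[x e],
  y2 e * (c e).[x e] <= (if main e then a e * (x e ^+ k * y e) else 0) + W,
  (if main e then a e * y e ^+ k.+1 else 0) - SM2 <= y e * (c e).[y e],
  x e * (c e).[x e] <= (if main e then a e * x e ^+ k.+1 else 0) + (SM2 + th * M * lam) &
  (K + 1) * (if main e then a e * (x e ^+ k * y e) else 0) <=
    K * (if main e then a e * x e ^+ k.+1 else 0) + (if main e then a e * y e ^+ k.+1 else 0)].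
  move=> e.
  have xe0 := x0 e; have xeM := xM e; have xe1 := le_trans xeM M1.
  have ye0 := y0 e; have yeM := yM e; have ye1 := le_trans yeM M1.
  have cx0 : 0 <= (c e).[x e] by apply: cge0.
  have cy0 : 0 <= (c e).[y e] by apply: cge0.
  have xc0 : 0 <= x e * (c e).[x e] by apply: mulr_ge0.
  have yc0 : 0 <= y e * (c e).[y e] by apply: mulr_ge0.
  have y2c0 : 0 <= y2 e * (c e).[x e] by apply: mulr_ge0.
  case: (boolP ((a e == 0) || (k < dg e)%N)) => hi.
    have nm : main e = false.
      rewrite /main; case/orP: hi => [/eqP->|kd]; first by rewrite eqxx.
      by rewrite gtn_eqF ?andbF.
    rewrite nm.
    have cxb : (c e).[x e] <= S * M ^+ k.+1.
      apply: le_trans (chigh e _ xe0 xe1 hi) _; apply: ler_wpM2l => //.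
      exact: lerX2.
    have MSM : M * (S * M ^+ k.+1) = SM2 by rewrite /SM2 [M ^+ k.+2]exprS; ring.
    split.
    - by rewrite sub0r; apply: le_trans xc0; rewrite oppr_le0.
    - rewrite add0r; apply: le_trans (_ : M * (S * M ^+ k.+1) <= _).
        by apply: ler_pM.
      rewrite MSM /W.
      have h1 : 0 <= S * M ^+ k * sig.
        by apply: mulr_ge0 => //; apply: mulr_ge0 => //; apply: exprn_ge0.
      clear -h1 thml0; lra.
    - by rewrite sub0r; apply: le_trans yc0; rewrite oppr_le0.
    - rewrite add0r; apply: le_trans (_ : M * (S * M ^+ k.+1) <= _).
        by apply: ler_pM.
      by rewrite MSM lerDl.
    - by rewrite !mulr0 addr0.
  move: hi; rewrite negb_or -leqNgt => /andP [ae dk].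
  have hS1 : 0 <= S * M ^+ k * sig.
    by apply: mulr_ge0 => //; apply: mulr_ge0 => //; apply: exprn_ge0.
  case: (eqVneq (dg e) k) => [deq|dne].
    have mt : main e = true by rewrite /main ae deq eqxx.
    rewrite mt.
    have cm : forall z, 0 <= z -> z <= 1 ->
        `|(c e).[z] - a e * z ^+ k| <= S * z ^+ k.+1.
      by move=> z z0 z1; rewrite -deq; apply: cmain.
    have cl : forall z, 0 <= z -> z <= 1 -> a e * z ^+ k - S * z ^+ k.+1 <= (c e).[z].
      move=> z z0 z1; have h := cm z z0 z1; rewrite distrC in h.
      have {}h := le_trans (ler_norm _) h; clear -h; lra.
    have cu : forall z, 0 <= z -> z <= 1 -> (c e).[z] <= a e * z ^+ k + S * z ^+ k.+1.
      move=> z z0 z1; have h := le_trans (ler_norm _) (cm z z0 z1); clear -h; lra.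
    have id1 : forall z : R, z * (a e * z ^+ k - S * z ^+ k.+1) =
        a e * z ^+ k.+1 - S * z ^+ k.+2 by move=> z; rewrite !exprS; ring.
    have id2 : forall z : R, z * (a e * z ^+ k + S * z ^+ k.+1) =
        a e * z ^+ k.+1 + S * z ^+ k.+2 by move=> z; rewrite !exprS; ring.
    have k2 : forall z, 0 <= z -> z <= M -> S * z ^+ k.+2 <= SM2.
      by move=> z z0 zM; apply: ler_wpM2l => //; apply: lerX2.
    split.
    - have h1 := ler_wpM2l xe0 (cl _ xe0 xe1); rewrite id1 in h1.
      have h2 := k2 _ xe0 xeM; clear -h1 h2; lra.
    - have h1 : y2 e * (c e).[x e] <= y e * (c e).[x e] + sig * (c e).[x e].
        by rewrite -mulrDl; apply: ler_wpM2r => //; apply: y2_s.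
      have h2 : y e * (c e).[x e] <= a e * (x e ^+ k * y e) + S * (x e ^+ k.+1 * y e).
        apply: le_trans (ler_wpM2l ye0 (cu _ xe0 xe1)) _.
        by rewrite le_eqVlt; apply/orP; left; apply/eqP; ring.
      have h3 : S * (x e ^+ k.+1 * y e) <= SM2.
        apply: ler_wpM2l => //; rewrite [M ^+ k.+2]exprSr.
        by apply: ler_pM => //; [apply: exprn_ge0 | apply: lerX2].
      have h4 : sig * (c e).[x e] <= S * M ^+ k * sig.
        rewrite mulrC; apply: ler_wpM2r => //.
        apply: le_trans (cup e _ xe0 xe1) _; rewrite deq.
        by apply: ler_wpM2l => //; apply: lerX2.
      rewrite /W; clear -h1 h2 h3 h4 thml0; lra.
    - have h1 := ler_wpM2l ye0 (cl _ ye0 ye1); rewrite id1 in h1.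
      have h2 := k2 _ ye0 yeM; clear -h1 h2; lra.
    - have h1 := ler_wpM2l xe0 (cu _ xe0 xe1); rewrite id2 in h1.
      have h2 := k2 _ xe0 xeM; clear -h1 h2 thml0; lra.
    - have h1 := ler_wpM2l (ha0 e) (@young R (x e) (y e) k xe0 ye0); rewrite hK1 -/K in h1.
      clear -h1; lra.
  have dlt : (dg e < k)%N by rewrite ltn_neqAle dne dk.
  have nm : main e = false by rewrite /main (negbTE dne) andbF.
  rewrite nm.
  have kp : (0 < k)%N by apply: leq_ltn_trans dlt.
  have ae0 : 0 < a e by rewrite lt_neqAle eq_sym ae ha0.
  have key : Lam * M ^+ k <= a e / 2 * th ^+ (dg e).+1 * M ^+ dg e.
    have h1 : Lam * M ^+ k <= Lam * M * M ^+ dg e.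
      by rewrite -mulrA -exprS; apply: ler_wpM2l => //; apply: pow_mono.
    apply: le_trans h1 _; apply: ler_wpM2r; first exact: exprn_ge0.
    have h2 : al * th ^+ k <= a e * th ^+ (dg e).+1.
      apply: ler_pM => //; [exact: ltW | apply: exprn_ge0; exact: ltW | exact: hal |].
      by apply: pow_mono => //; apply: ltW.
    clear -h2 E3; lra.
  have thM0 : 0 <= th * M by apply: mulr_ge0 => //; apply: ltW.
  have lowx : 0 < x e -> x e <= th * M.
    move=> xp; rewrite leNgt; apply/negP => hx.
    have cl := c_le_lam e xp.
    have h1 := clow e (x e) ae xe0 xeM.
    have h2 : (th * M) ^+ dg e <= x e ^+ dg e by apply: lerX2 => //; apply: ltW.
    have q0 : 0 < a e / 2 * (th ^+ dg e * M ^+ dg e).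
      by rewrite mulr_gt0 ?divr_gt0 // mulr_gt0 // exprn_gt0.
    have : a e / 2 * (th * M) ^+ dg e <= a e / 2 * th ^+ (dg e).+1 * M ^+ dg e.
      apply: le_trans key; apply: le_trans lam_bd; apply: le_trans cl.
      apply: le_trans h1; apply: ler_wpM2l => //; by rewrite divr_ge0 // ltW.
    rewrite exprMn exprS => h3; clear -h3 q0 th1; nra.
  have lowy : y e <= th * M.
    rewrite leNgt; apply/negP => hy.
    have h1 : (th * M) ^+ (dg e).+1 < y e ^+ (dg e).+1 by rewrite ltrXn2r.
    have h2 : a e / 2 * y e ^+ (dg e).+1 <= y e * (c e).[y e].
      rewrite exprS mulrCA; apply: ler_wpM2l => //; exact: clow.
    have h3 : y e * (c e).[y e] <= social_cost c y.
      rewrite /social_cost (bigD1 e) //= lerDl; apply: sumr_ge0 => i _.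
      by apply: mulr_ge0 => //; apply: cge0.
    have h4 : M * lam <= a e / 2 * (th * M) ^+ (dg e).+1.
      apply: le_trans (_ : M * (a e / 2 * th ^+ (dg e).+1 * M ^+ dg e) <= _).
        by apply: ler_wpM2l => //; apply: le_trans lam_bd key.
      by rewrite exprMn [M ^+ (dg e).+1]exprS le_eqVlt; apply/orP; left; apply/eqP; ring.
    have h5 : a e / 2 * (th * M) ^+ (dg e).+1 < a e / 2 * y e ^+ (dg e).+1.
      by rewrite ltr_pM2l // divr_gt0.
    move: hlt; rewrite Lx => hlt; clear -h2 h3 h4 h5 hlt; lra.
  split.
  - by rewrite sub0r; apply: le_trans xc0; rewrite oppr_le0.
  - rewrite add0r; apply: le_trans (_ : lam * th * M <= _); last first.
      by rewrite /W lerDr; apply: addr_ge0.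
    case: (posnP (dg e)) => [d0|dp].
      have : y2 e <= 0 by apply: y2_d0.
      move=> h; have -> : y2 e = 0 by apply/eqP; rewrite eq_le h y20.
      by rewrite mul0r mulr_ge0 // mulr_ge0 // ltW.
    case: (eqVneq (x e) 0) => [xz|xn].
      have : (c e).[x e] = 0.
        have := cmain e 0 (lexx _) ler01; rewrite !expr0n /= (gtn_eqF dp) /= !mulr0 !subr0.
        by rewrite normr_le0 xz => /eqP.
      move=> ->; rewrite mulr0; apply: mulr_ge0 => //; apply: mulr_ge0 => //; exact: ltW.
    have xp : 0 < x e by rewrite lt_neqAle eq_sym xn xe0.
    have nps : e \notin pth ps.
      apply/negP => he; case: (hps' e he) => [ae'|kd]; first by rewrite ae' eqxx in ae.
      by move: kd; rewrite leqNgt dlt.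
    apply: le_trans (_ : th * M * lam <= _); last by rewrite le_eqVlt; apply/orP; left; apply/eqP; ring.
    apply: ler_pM => //; last exact: c_le_lam.
    exact: le_trans (y2_n e nps) lowy.
  - by rewrite sub0r; apply: le_trans yc0; rewrite oppr_le0.
  - rewrite add0r; apply: le_trans (_ : th * M * lam <= _); last by rewrite lerDr.
    case: (eqVneq (x e) 0) => [->|xn]; first by rewrite mul0r.
    have xp : 0 < x e by rewrite lt_neqAle eq_sym xn xe0.
    apply: le_trans (xc_le e) _; apply: ler_wpM2r => //; exact: lowx.
  - by rewrite !mulr0 addr0.
pose X := \sum_e (if main e then a e * x e ^+ k.+1 else 0).
pose Y := \sum_e (if main e then a e * y e ^+ k.+1 else 0).
pose Z := \sum_e (if main e then a e * (x e ^+ k * y e) else 0).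
have sumC : forall C : R, \sum_(e : E) C = n * C.
  by move=> C; rewrite sumr_const -mulr_natl.
have h1 : (K + 1) * Z <= K * X + Y.
  rewrite /Z /X /Y !mulr_sumr -big_split; apply: ler_sum => e _.
  by case: (termw e).
have h2 : X - n * SM2 <= Z + n * W.
  apply: (le_trans (y := social_cost c x)).
    rewrite -sumC -sumrB; apply: ler_sum => e _; by case: (termw e).
  apply: le_trans VI _.
  rewrite -sumC -big_split; apply: ler_sum => e _; by case: (termw e).
have h3 : Y - n * SM2 <= social_cost c y.
  rewrite -sumC -sumrB; apply: ler_sum => e _; by case: (termw e).
have h4 : social_cost c x <= X + n * (SM2 + th * M * lam).
  rewrite -sumC -big_split; apply: ler_sum => e _; by case: (termw e).
have fin := @final_alg R K X Y Z _ _ _ _ _ K0 h1 h2 h3 h4.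
have ML : M ^+ k.+1 * beta <= social_cost c y by rewrite mulrC.
have Mk1 : 0 <= M ^+ k.+1 by apply: exprn_ge0.
have B1 : n * (2 * (K + 2)) * SM2 <= eps / 6 * social_cost c y.
  have -> : n * (2 * (K + 2)) * SM2 = M * (n * (2 * k.+2%:R) * S) * M ^+ k.+1.
    by rewrite hK2 /SM2 [M ^+ k.+2]exprS; ring.
  apply: le_trans (ler_wpM2r Mk1 E4) _.
  have -> : eps / 6 * beta * M ^+ k.+1 = eps / 6 * (M ^+ k.+1 * beta) by ring.
  by apply: ler_wpM2l => //; apply: ltW.
have B2 : n * (K + 1) * (S * M ^+ k * sig) <= eps / 6 * social_cost c y.
  have nKS : 0 <= n * (K + 1) * S by apply: mulr_ge0 => //; apply: mulr_ge0 => //; apply: addr_ge0.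
  apply: (le_trans (y := n * (K + 1) * S * (M * sig))).
    have -> : n * (K + 1) * (S * M ^+ k * sig) = n * (K + 1) * S * (M ^+ k * sig) by ring.
    exact: ler_wpM2l.
  have sig2 : 0 <= sig / 2 by apply: divr_ge0.
  apply: (le_trans (y := eps / 6 * al * (sig / 2))).
    have -> : n * (K + 1) * S * (M * sig) = M * (n * k.+1%:R * S * 2) * (sig / 2).
      by rewrite hK1; field.
    exact: ler_wpM2r.
  have -> : eps / 6 * al * (sig / 2) = eps / 6 * (sig * (al / 2)) by field.
  by apply: ler_wpM2l => //; apply: ltW.
have B3 : n * (K + 2) * (lam * th * M) <= eps / 6 * social_cost c y.
  have nK : 0 <= n * (K + 2) * th * M.
    by apply: mulr_ge0 => //; apply: mulr_ge0 => //; [apply: mulr_ge0 => //; apply: addr_ge0 | apply: ltW].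
  apply: (le_trans (y := n * (K + 2) * th * M * (Lam * M ^+ k))).
    rewrite [X in X <= _](_ : _ = n * (K + 2) * th * M * lam); last by ring.
    exact: ler_wpM2l.
  have -> : n * (K + 2) * th * M * (Lam * M ^+ k) = th * (n * k.+2%:R * Lam) * M ^+ k.+1.
    by rewrite hK2 exprS; ring.
  apply: le_trans (ler_wpM2r Mk1 thK) _.
  have -> : eps / 6 * beta * M ^+ k.+1 = eps / 6 * (M ^+ k.+1 * beta) by ring.
  by apply: ler_wpM2l => //; apply: ltW.
move: fin; rewrite /W => fin.
clear -fin B1 B2 B3 n0 K0.
lra.
Qed.
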